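(* If $(\mathcal{C},P)$ is a heaco, then the opposite doctrine $(\mathcal{C},P^o)$ is a tripos (with full comprehension).
   Context: A doctrine is a pair $(\mathcal{C},P)$, $\mathcal{C}$ a category with finite products, $P:\mathcal{C}^{op}\to\mathbf{Pos}$ a functor, $f^*=P(f)$; primary: each $P(A)$ has binary meets preserved by each $f^*$. The opposite doctrine has $P^o(A)=P(A)^{op}$, $P^o(f)=f^*$. Elementary: primary and for every $A$ there is $\delta_A\in P(A\times A)$ such that for every $X$ the assignment $\psi\mapsto\langle\pi_1,\pi_2\rangle^*\psi\wedge\langle\pi_2,\pi_3\rangle^*\delta_A$ is a left adjoint $P(X\times A)\to P(X\times A\times A)$ to $(id_X\times\Delta_A)^*$. Graph of $f:X\to A$: $\mathcal{G}(f)=(f\times id_A)^*\delta_A$. Stable initial object: initial $0$ with $X\times0\cong0$ for all $X$. AC: for every $A$ not stable initial and every $\Gamma$, $\pi_\Gamma^*$ ($\pi_\Gamma:\Gamma\times A\to\Gamma$) has a left adjoint $\Sigma_{\pi_\Gamma}$ and each $\psi\in P(\Gamma\times A)$ has a chosen $\epsilon_\psi:\Gamma\to A$ with $\Sigma_{\pi_\Gamma}\psi=\langle id_\Gamma,\epsilon_\psi\rangle^*\psi$ (also with factors swapped). Co-comprehension: each $P(A)$ has a bottom and each $\alpha$ has $\lceil\alpha\rceil:\{\alpha\}^o\to A$ with $\lceil\alpha\rceil^*\alpha=\bot$, universal among $f$ with $f^*\alpha=\bot$; full if $\lceil\beta\rceil$ factoring through $\lceil\alpha\rceil$ implies $\alpha\le\beta$.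 Comprehension is the dual notion (tops, $\lfloor\alpha\rfloor:\{\alpha\}\to A$ universal among $f$ with $f^*\alpha=\top$; full if $\lfloor\alpha\rfloor$ factoring through $\lfloor\beta\rfloor$ implies $\alpha\le\beta$). An eaco is an elementary doctrine with full co-comprehension satisfying AC such that for every $f:X\to A$, $\alpha\in P(A)$: $f^*\langle\epsilon_{\mathcal{G}(\lceil\alpha\rceil)},id_A\rangle^*\mathcal{G}(\lceil\alpha\rceil)=\langle\epsilon_{\mathcal{G}(\lceil f^*\alpha\rceil)},id_X\rangle^*\mathcal{G}(\lceil f^*\alpha\rceil)$. Higher order: for every $A$ there are $\mathbb{P}(A)$ and $\in_A\in P(A\times\mathbb{P}(A))$ such that every $\phi\in P(A\times Y)$ equals $(id_A\times\chi_\phi)^*\in_A$ for some $\chi_\phi:Y\to\mathbb{P}(A)$. A heaco is a higher order eaco. A tripos is a doctrine such that (i) each $P(A)$ is a Heyting algebra and each $f^*$ a Heyting homomorphism; (ii) for every product projection $f$, $f^*$ has left and right adjoints $\Sigma_f,\Pi_f$ satisfying Beck–Chevalley ($h^*\Sigma_f\gamma=\Sigma_gk^*\gamma$, $h^*\Pi_f\gamma=\Pi_gk^*\gamma$ for pullback squares $h\circ g=f\circ k$); (iii) for each $X$ there is $\delta_X\in P(X\times X)$ with $\top_X\le\Delta_X^*\alpha$ iff $\delta_X\le\alpha$; (iv) it is higher order. *)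

(* Defs.v *)
Set Implicit Arguments.

Record Cat : Type := {
  Ob : Type;
  Hom : Ob -> Ob -> Type;
  idm : forall A, Hom A A;
  comp : forall A B C, Hom B C -> Hom A B -> Hom A C;
  comp_idl : forall A B (f : Hom A B), comp (idm B) f = f;
  comp_idr : forall A B (f : Hom A B), comp f (idm A) = f;
  comp_assoc : forall A B C D (f : Hom A B) (g : Hom B C) (h : Hom C D),
      comp h (comp g f) = comp (comp h g) f;
  term : Ob;
  bang : forall A, Hom A term;
  bang_unique : forall A (f : Hom A term), f = bang A;
  prod : Ob -> Ob -> Ob;
  pi1 : forall A B, Hom (prod A B) A;
  pi2 : forall A B, Hom (prod A B) B;
  pair : forall X A B, Hom X A -> Hom X B -> Hom X (prod A B);
  pi1_pair : forall X A B (f : Hom X A) (g : Hom X B), comp (pi1 A B) (pair f g) = f;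
  pi2_pair : forall X A B (f : Hom X A) (g : Hom X B), comp (pi2 A B) (pair f g) = g;
  pair_unique : forall X A B (h : Hom X (prod A B)),
      h = pair (comp (pi1 A B) h) (comp (pi2 A B) h)
}.

Arguments Hom {c} _ _.
Arguments idm {c} A.
Arguments comp {c A B C} _ _.
Arguments term {c}.
Arguments bang {c} A.
Arguments prod {c} _ _.
Arguments pi1 {c A B}.
Arguments pi2 {c A B}.
Arguments pair {c X A B} _ _.

Section CatDefs.
Context {C : Cat}.

Definition prodmap {X Y A B : Ob C} (f : Hom X A) (g : Hom Y B) : Hom (prod X Y) (prod A B) :=
  pair (comp f pi1) (comp g pi2).

Definition diag (A : Ob C) : Hom A (prod A A) := pair (idm A) (idm A).

Definition is_iso {A B : Ob C} (i : Hom A B) : Prop :=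
  exists j : Hom B A, comp j i = idm A /\ comp i j = idm B.

Definition isomorphic (A B : Ob C) : Prop := exists i : Hom A B, is_iso i.

Definition is_initial (Z : Ob C) : Prop :=
  forall X, exists f : Hom Z X, forall g : Hom Z X, g = f.

Definition is_stable_initial (Z : Ob C) : Prop :=
  is_initial Z /\ forall X, isomorphic (prod X Z) Z.

Definition is_product {W X Z : Ob C} (f : Hom W X) (g : Hom W Z) : Prop :=
  forall U (a : Hom U X) (b : Hom U Z),
    exists u : Hom U W, (comp f u = a /\ comp g u = b) /\
      forall u' : Hom U W, comp f u' = a -> comp g u' = b -> u' = u.

Definition is_product_projection {W X : Ob C} (f : Hom W X) : Prop :=
  exists (Z : Ob C) (g : Hom W Z), is_product f g.

Definition is_pullback {X Y W V : Ob C} (h : Hom Y X) (f : Hom W X)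
    (g : Hom V Y) (k : Hom V W) : Prop :=
  comp h g = comp f k /\
  forall U (a : Hom U Y) (b : Hom U W), comp h a = comp f b ->
    exists u : Hom U V, (comp g u = a /\ comp k u = b) /\
      forall u' : Hom U V, comp g u' = a -> comp k u' = b -> u' = u.

End CatDefs.

Record Doctrine (C : Cat) : Type := {
  Pr : Ob C -> Type;
  le : forall A, Pr A -> Pr A -> Prop;
  le_refl : forall A (a : Pr A), le a a;
  le_trans : forall A (a b c : Pr A), le a b -> le b c -> le a c;
  le_antisym : forall A (a b : Pr A), le a b -> le b a -> a = b;
  re : forall (X A : Ob C), Hom X A -> Pr A -> Pr X;
  re_mono : forall X A (f : Hom X A) (a b : Pr A), le a b -> le (@re X A f a) (@re X A f b);
  re_id : forall A (a : Pr A), @re A A (idm A) a = a;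
  re_comp : forall X Y Z (f : Hom X Y) (g : Hom Y Z) (a : Pr Z),
      @re X Z (comp g f) a = @re X Y f (@re Y Z g a)
}.

Arguments Pr {C} d _.
Arguments le {C d A} _ _.
Arguments re {C d X A} _ _.

Definition op_doctrine {C : Cat} (D : Doctrine C) : Doctrine C :=
  {| Pr := Pr D;
     le := fun A (a b : Pr D A) => le b a;
     le_refl := fun A a => @le_refl C D A a;
     le_trans := fun A a b c h1 h2 => @le_trans C D A c b a h2 h1;
     le_antisym := fun A a b h1 h2 => @le_antisym C D A a b h2 h1;
     re := fun X A f a => re f a;
     re_mono := fun X A f a b h => @re_mono C D X A f b a h;
     re_id := fun A a => @re_id C D A a;
     re_comp := fun X Y Z f g a => @re_comp C D X Y Z f g a |}.

Section DoctrineDefs.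
Context {C : Cat} (D : Doctrine C).

Definition is_top {A} (t : Pr D A) : Prop := forall a, le a t.
Definition is_bot {A} (b : Pr D A) : Prop := forall a, le b a.
Definition is_meet {A} (m a b : Pr D A) : Prop :=
  le m a /\ le m b /\ forall c, le c a -> le c b -> le c m.
Definition is_join {A} (j a b : Pr D A) : Prop :=
  le a j /\ le b j /\ forall c, le a c -> le b c -> le j c.
Definition is_imp {A} (x a b : Pr D A) : Prop :=
  forall c, le c x <-> (forall m, is_meet m c a -> le m b).

Definition primary : Prop :=
  (forall A (a b : Pr D A), exists m, is_meet m a b) /\
  (forall X A (f : Hom X A) (a b m : Pr D A),
      is_meet m a b -> is_meet (re f m) (re f a) (re f b)).

(** delta is an elementary structure: for X x A x A := X x (A x A),
    psi |-> <pi1,pi2>^* psi /\ <pi2,pi3>^* delta_A is left adjoint to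
    (id_X x Delta_A)^* *)
Definition elementary_delta (delta : forall A, Pr D (prod A A)) : Prop :=
  forall (A X : Ob C) (psi : Pr D (prod X A)) (phi : Pr D (prod X (prod A A)))
         (m : Pr D (prod X (prod A A))),
    is_meet m (re (pair pi1 (comp pi1 pi2)) psi)
              (re (pair (comp pi1 pi2) (comp pi2 pi2)) (delta A)) ->
    (le m phi <-> le psi (re (prodmap (idm X) (diag A)) phi)).

Definition graph (delta : forall A, Pr D (prod A A)) {X A : Ob C} (f : Hom X A)
  : Pr D (prod X A) := re (prodmap f (idm A)) (delta A).

Definition higher_order : Prop :=
  forall A : Ob C, exists (PA : Ob C) (inA : Pr D (prod A PA)),
    forall (Y : Ob C) (phi : Pr D (prod A Y)),
      exists chi : Hom Y PA, phi = re (prodmap (idm A) chi) inA.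

Definition left_adj {W X : Ob C} (f : Hom W X) (S : Pr D W -> Pr D X) : Prop :=
  forall psi phi, le (S psi) phi <-> le psi (re f phi).
Definition right_adj {W X : Ob C} (f : Hom W X) (Pi : Pr D W -> Pr D X) : Prop :=
  forall phi psi, le (re f phi) psi <-> le phi (Pi psi).

Definition tripos : Prop :=
  (forall A : Ob C,
     (exists t : Pr D A, is_top t) /\ (exists b : Pr D A, is_bot b) /\
     (forall a b : Pr D A, exists m, is_meet m a b) /\
     (forall a b : Pr D A, exists j, is_join j a b) /\
     (forall a b : Pr D A, exists i, is_imp i a b)) /\
  (forall X A (f : Hom X A),
     (forall t : Pr D A, is_top t -> is_top (re f t)) /\
     (forall b : Pr D A, is_bot b -> is_bot (re f b)) /\
     (forall m a b : Pr D A, is_meet m a b -> is_meet (re f m) (re f a) (re f b)) /\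
     (forall j a b : Pr D A, is_join j a b -> is_join (re f j) (re f a) (re f b)) /\
     (forall i a b : Pr D A, is_imp i a b -> is_imp (re f i) (re f a) (re f b))) /\
  (forall W X (f : Hom W X), is_product_projection f ->
     (exists S, left_adj f S) /\ (exists Pi, right_adj f Pi)) /\
  (forall (X Y W V : Ob C) (f : Hom W X) (h : Hom Y X) (g : Hom V Y) (k : Hom V W),
     is_product_projection f -> is_product_projection g -> is_pullback h f g k ->
     (forall Sf Sg, left_adj f Sf -> left_adj g Sg ->
        forall gamma, re h (Sf gamma) = Sg (re k gamma)) /\
     (forall Pf Pg, right_adj f Pf -> right_adj g Pg ->
        forall gamma, re h (Pf gamma) = Pg (re k gamma))) /\
  (forall X : Ob C, exists delta : Pr D (prod X X), forall alpha : Pr D (prod X X),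
     (forall t : Pr D X, is_top t -> le t (re (diag X) alpha)) <-> le delta alpha) /\
  higher_order.

Definition is_comprehension {A O : Ob C} (alpha : Pr D A) (c : Hom O A) : Prop :=
  is_top (re c alpha) /\
  forall X (f : Hom X A), is_top (re f alpha) ->
    exists g : Hom X O, comp c g = f /\ forall g' : Hom X O, comp c g' = f -> g' = g.

Definition has_full_comprehension : Prop :=
  (forall A : Ob C, exists t : Pr D A, is_top t) /\
  (forall A (alpha : Pr D A), exists (O : Ob C) (c : Hom O A), is_comprehension alpha c) /\
  (forall A (alpha beta : Pr D A) (O1 O2 : Ob C) (c : Hom O1 A) (d : Hom O2 A),
     is_comprehension alpha c -> is_comprehension beta d ->
     (exists g : Hom O1 O2, comp d g = c) -> le alpha beta).

Record HeacoStr : Type := {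
  hs_primary : primary;
  hs_delta : forall A, Pr D (prod A A);
  hs_elementary : elementary_delta hs_delta;
  hs_bot : forall A, Pr D A;
  hs_bot_spec : forall A, is_bot (hs_bot A);
  hs_coc : forall A, Pr D A -> Ob C;
  hs_ccl : forall A (alpha : Pr D A), Hom (@hs_coc A alpha) A;
  hs_ccl_bot : forall A (alpha : Pr D A), re (@hs_ccl A alpha) alpha = hs_bot _;
  hs_ccl_univ : forall A (alpha : Pr D A) X (f : Hom X A), re f alpha = hs_bot X ->
      exists g : Hom X (@hs_coc A alpha), comp (@hs_ccl A alpha) g = f /\
        forall g', comp (@hs_ccl A alpha) g' = f -> g' = g;
  hs_ccl_full : forall A (alpha beta : Pr D A),
      (exists g : Hom (@hs_coc A beta) (@hs_coc A alpha), comp (@hs_ccl A alpha) g = @hs_ccl A beta) ->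
      le alpha beta;
  (* AC, for pi_G : G x A -> G *)
  hs_Sigma : forall G A, ~ is_stable_initial A -> Pr D (prod G A) -> Pr D G;
  hs_Sigma_adj : forall G A (h : ~ is_stable_initial A),
      left_adj (pi1 : Hom (prod G A) G) (@hs_Sigma G A h);
  hs_eps : forall G A, ~ is_stable_initial A -> Pr D (prod G A) -> Hom G A;
  hs_eps_spec : forall G A (h : ~ is_stable_initial A) (psi : Pr D (prod G A)),
      @hs_Sigma G A h psi = re (pair (idm G) (@hs_eps G A h psi)) psi;
  (* AC with factors swapped, for pi_G : A x G -> G *)
  hs_Sigma' : forall G A, ~ is_stable_initial A -> Pr D (prod A G) -> Pr D G;
  hs_Sigma'_adj : forall G A (h : ~ is_stable_initial A),
      left_adj (pi2 : Hom (prod A G) G) (@hs_Sigma' G A h);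
  hs_eps' : forall G A, ~ is_stable_initial A -> Pr D (prod A G) -> Hom G A;
  hs_eps'_spec : forall G A (h : ~ is_stable_initial A) (psi : Pr D (prod A G)),
      @hs_Sigma' G A h psi = re (pair (@hs_eps' G A h psi) (idm G)) psi;
  (* eaco condition (meaningful when the co-comprehension objects are not
     stable initial, so that the relevant epsilons exist) *)
  hs_eaco : forall X A (f : Hom X A) (alpha : Pr D A)
      (h1 : ~ is_stable_initial (@hs_coc A alpha))
      (h2 : ~ is_stable_initial (@hs_coc X (re f alpha))),
      re f (re (pair (@hs_eps' A (@hs_coc A alpha) h1
                        (graph hs_delta (@hs_ccl A alpha))) (idm A))
               (graph hs_delta (@hs_ccl A alpha)))
      = re (pair (@hs_eps' X (@hs_coc X (re f alpha)) h2
                    (graph hs_delta (@hs_ccl X (re f alpha)))) (idm X))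
           (graph hs_delta (@hs_ccl X (re f alpha)));
  hs_higher : higher_order
}.

Definition heaco : Prop := inhabited HeacoStr.

End DoctrineDefs.

(* Main.v *)
Require Import Defs.
From Stdlib Require Import Classical ClassicalEpsilon.

Section CatLemmas.
Context {C : Cat}.

Lemma hom_ext {X A B : Ob C} (h h' : Hom X (prod A B)) :
  comp pi1 h = comp pi1 h' -> comp pi2 h = comp pi2 h' -> h = h'.
Proof.
  intros E1 E2. rewrite (pair_unique _ _ _ _ h), (pair_unique _ _ _ _ h'). rewrite E1, E2. reflexivity.
Qed.

Lemma pair_comp {Y X A B : Ob C} (f : Hom X A) (g : Hom X B) (h : Hom Y X) :
  comp (pair f g) h = pair (comp f h) (comp g h).
Proof.
  apply hom_ext.
  - rewrite comp_assoc, !pi1_pair. reflexivity.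
  - rewrite comp_assoc, !pi2_pair. reflexivity.
Qed.

Lemma pair_pi : forall A B : Ob C, pair (@pi1 C A B) pi2 = idm (prod A B).
Proof.
  intros. apply hom_ext; rewrite ?pi1_pair, ?pi2_pair, comp_idr; reflexivity.
Qed.

Lemma bang_eq {A} (f g : Hom A (@term C)) : f = g.
Proof. rewrite (bang_unique _ _ f), (bang_unique _ _ g). reflexivity. Qed.

Lemma prodmap_pair {Y X Z A B : Ob C} (f : Hom X A) (g : Hom Z B) (u : Hom Y X) (v : Hom Y Z) :
  comp (prodmap f g) (pair u v) = pair (comp f u) (comp g v).
Proof.
  unfold prodmap. rewrite pair_comp, <- !comp_assoc, pi1_pair, pi2_pair. reflexivity.
Qed.

Lemma initW_ex {W Z : Ob C} (w : Hom W Z) : is_stable_initial Z ->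
  forall V, exists g : Hom W V, True.
Proof.
  intros [HI _] V. destruct (HI V) as [f _]. exists (comp f w). trivial.
Qed.

Lemma initW_uniq {W Z : Ob C} (w : Hom W Z) : is_stable_initial Z ->
  forall V (u v : Hom W V), u = v.
Proof.
  intros [HI HS] V u v.
  destruct (HS W) as [i [j [Eji Eij]]].
  assert (E : comp u (@pi1 _ W Z) = comp v pi1).
  { assert (K : forall (a : Hom (prod W Z) V), a = comp (comp a j) i).
    { intro a. rewrite <- comp_assoc, Eji, comp_idr. reflexivity. }
    rewrite (K (comp u pi1)), (K (comp v pi1)).
    destruct (HI V) as [f0 Hf0].
    rewrite (Hf0 (comp (comp u pi1) j)), (Hf0 (comp (comp v pi1) j)). reflexivity. }
  assert (K2 : forall (a : Hom W V), a = comp (comp a pi1) (pair (idm W) w)).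
  { intro a. rewrite <- comp_assoc, pi1_pair, comp_idr. reflexivity. }
  rewrite (K2 u), (K2 v), E. reflexivity.
Qed.

End CatLemmas.

Create HintDb catnorm.
#[export] Hint Rewrite <- @comp_assoc : catnorm.
#[export] Hint Rewrite @pi1_pair @pi2_pair @comp_idl @comp_idr @pair_comp : catnorm.
Ltac cn := unfold prodmap, diag; autorewrite with catnorm.

Section Doc.
Context {C : Cat} (D : Doctrine C) (H : HeacoStr D).

Notation bot := (hs_bot H).
Notation delta := (hs_delta H).

Lemma le_bot {A} (a : Pr D A) : le (bot A) a.
Proof. apply (hs_bot_spec H). Qed.

Lemma reE {X Y Z : Ob C} (f : Hom X Y) (g : Hom Y Z) (a : Pr D Z) : re f (re g a) = re (comp g f) a.
Proof. rewrite re_comp. reflexivity. Qed.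

Lemma meet_ex {A} (a b : Pr D A) : exists m, is_meet D m a b.
Proof. apply (proj1 (hs_primary H)). Qed.

Lemma meet_pres {X A} (f : Hom X A) (a b m : Pr D A) :
  is_meet D m a b -> is_meet D (re f m) (re f a) (re f b).
Proof. apply (proj2 (hs_primary H)). Qed.

Lemma TL {Y A} (psi : Pr D (prod Y A)) : le psi (re (comp (diag A) pi2) (delta A)).
Proof.
  destruct (meet_ex (re (pair pi1 (comp pi1 pi2)) psi)
              (re (pair (comp pi1 pi2) (comp pi2 pi2)) (delta A))) as [m Hm].
  pose proof (proj1 (hs_elementary H A Y psi m Hm) (le_refl _ _ _)) as K.
  eapply le_trans; [exact K|].
  destruct Hm as [_ [Hm2 _]].
  eapply le_trans; [apply re_mono; exact Hm2|].
  rewrite reE. replace (comp (pair (comp pi1 pi2) (comp pi2 pi2)) (prodmap (idm Y) (diag A)))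
    with (comp (diag A) (@pi2 _ Y A)); [apply le_refl|].
  cn. reflexivity.
Qed.

Lemma TOPG {Y A} (f : Hom Y A) (c : Pr D Y) : le c (re (comp (diag A) f) (delta A)).
Proof.
  pose proof (re_mono _ _ _ (pair (idm Y) f) _ _ (TL (re pi1 c))) as K.
  rewrite !reE in K. replace (comp pi1 (pair (idm Y) f)) with (idm Y) in K
    by (rewrite pi1_pair; reflexivity).
  rewrite re_id in K. eapply le_trans; [exact K|].
  replace (comp (comp (diag A) pi2) (pair (idm Y) f)) with (comp (diag A) f); [apply le_refl|].
  rewrite <- comp_assoc, pi2_pair. reflexivity.
Qed.

Definition top A : Pr D A := re (diag A) (delta A).

Lemma le_top {A} (a : Pr D A) : le a (top A).
Proof. pose proof (TOPG (idm A) a) as K. rewrite comp_idr in K. exact K. Qed.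

Lemma top_pres {X A} (f : Hom X A) : re f (top A) = top X.
Proof.
  apply le_antisym; [apply le_top|]. unfold top at 2. rewrite reE. apply TOPG.
Qed.

Lemma bot_eq {A} (a : Pr D A) : le a (bot A) -> a = bot A.
Proof. intro h. apply le_antisym; [exact h|apply le_bot]. Qed.

Lemma top_eq {A} (a : Pr D A) : le (top A) a -> a = top A.
Proof. intro h. apply le_antisym; [apply le_top|exact h]. Qed.

Lemma LZP {Y A W} (psi : Pr D (prod Y A)) (w : Hom W Y) (u v : Hom W A) c :
  le c (re (pair v u) (delta A)) -> le c (re (pair w v) psi) -> le c (re (pair w u) psi).
Proof.
  intros H1 H2.
  set (phi := re (pair pi1 (comp pi2 pi2)) psi : Pr D (prod Y (prod A A))).
  destruct (meet_ex (re (pair pi1 (comp pi1 pi2)) psi)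
              (re (pair (comp pi1 pi2) (comp pi2 pi2)) (delta A))) as [m Hm].
  assert (Km : le m phi).
  { apply (proj2 (hs_elementary H A Y psi phi Hm)). unfold phi. rewrite reE.
    replace (comp (pair pi1 (comp pi2 pi2)) (prodmap (idm Y) (diag A))) with (idm (prod Y A)).
    - rewrite re_id. apply le_refl.
    - cn. symmetry. apply pair_pi. }
  set (t := pair w (pair v u)).
  pose proof (meet_pres t _ _ _ Hm) as Ht. destruct Ht as [_ [_ Ht]].
  rewrite !reE in Ht.
  assert (E1 : comp (pair pi1 (comp pi1 pi2)) t = pair w v) by (unfold t; cn; reflexivity).
  assert (E2 : comp (pair (comp pi1 pi2) (comp pi2 pi2)) t = pair v u) by (unfold t; cn; reflexivity).
  rewrite E1, E2 in Ht. specialize (Ht c H2 H1).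
  eapply le_trans; [exact Ht|]. eapply le_trans; [apply re_mono; exact Km|].
  unfold phi. rewrite reE. replace (comp (pair pi1 (comp pi2 pi2)) t) with (pair w u);
    [apply le_refl|unfold t; cn; reflexivity].
Qed.

Lemma SYM {W A} (u v : Hom W A) c :
  le c (re (pair u v) (delta A)) -> le c (re (pair v u) (delta A)).
Proof.
  intro H1.
  pose proof (@LZP A A W (re (pair pi2 pi1) (delta A)) u v u c H1) as K.
  rewrite !reE in K.
  replace (comp (pair pi2 pi1) (pair u v)) with (pair v u) in K by (cn; reflexivity).
  apply K.
  replace (comp (pair pi2 pi1) (pair u u)) with (comp (diag A) u) by (cn; reflexivity).
  apply TOPG.
Qed.

Lemma LZ {W A} (u v : Hom W A) (rho : Pr D A) c :
  le c (re (pair v u) (delta A)) -> le c (re v rho) -> le c (re u rho).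
Proof.
  intros H1 H2.
  pose proof (@LZP term A W (re pi2 rho) (bang W) u v c H1) as K.
  rewrite !reE, !pi2_pair in K. apply K. exact H2.
Qed.


Notation ccl := (hs_ccl H).
Notation coc := (hs_coc H).

Lemma CRIT1 {A} (a b : Pr D A) : le a b -> re (ccl A b) a = bot _.
Proof.
  intro h. apply bot_eq. rewrite <- (hs_ccl_bot H A b). apply re_mono. exact h.
Qed.

Lemma CRIT2 {A} (a b : Pr D A) : le (re (ccl A b) a) (bot _) -> le a b.
Proof.
  intro h. apply (hs_ccl_full H A).
  destruct (hs_ccl_univ H A a _ (ccl A b) (bot_eq _ h)) as [g [Hg _]].
  exists g. exact Hg.
Qed.

Lemma TRIV {Y Z} (w : Hom Y Z) : is_stable_initial Z -> forall a b : Pr D Y, le a b.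
Proof.
  intros HZ a b. apply (hs_ccl_full H Y).
  destruct (initW_ex (comp w (ccl Y b)) HZ (coc Y a)) as [g _].
  exists g. apply (initW_uniq (comp w (ccl Y b)) HZ).
Qed.

Lemma coc_stable_top {A} (z : Pr D A) : is_stable_initial (coc A z) -> forall b, le b z.
Proof.
  intros HZ b. apply (hs_ccl_full H A).
  destruct (initW_ex (idm _) HZ (coc A b)) as [g _].
  exists g. apply (initW_uniq (idm _) HZ).
Qed.

Definition point {X} (hX : ~ is_stable_initial X) : Hom term X :=
  hs_eps H term hX (bot (prod term X)).

Lemma split_mono_bot {X A} (s : Hom X A) (r : Hom A X) :
  comp r s = idm X -> re s (bot A) = bot X.
Proof.
  intro E. apply bot_eq. eapply le_trans; [apply re_mono; apply (le_bot (re r (bot X)))|].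
  rewrite reE, E, re_id. apply le_refl.
Qed.

Lemma BP {X A} (f : Hom X A) : re f (bot A) = bot X.
Proof.
  apply bot_eq.
  destruct (classic (exists Z (w : Hom X Z), is_stable_initial Z)) as [[Z [w HZ]]|NX].
  { apply (TRIV w HZ). }
  assert (hX : ~ is_stable_initial X) by (intro S; apply NX; exists X, (idm X); exact S).
  destruct (classic (is_stable_initial (coc A (bot A)))) as [S1|h1].
  { exfalso. destruct (hs_ccl_univ H A (bot A) A (idm A) (re_id _ _ _)) as [s [Hs _]].
    apply NX. exists (coc A (bot A)), (comp s f). exact S1. }
  set (g := re f (bot A)).
  destruct (classic (is_stable_initial (coc X g))) as [S2|h2].
  { exfalso.
    assert (Ex : re (point hX) g = bot term).
    { unfold g. rewrite reE. apply (split_mono_bot _ (bang A)). apply bang_eq. }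
    destruct (hs_ccl_univ H X g term (point hX) Ex) as [t [Ht _]].
    apply NX. exists (coc X g), (comp t (bang X)). exact S2. }
  pose proof (hs_eaco H X A f (bot A) h1 h2) as E.
  set (m1 := ccl A (bot A)) in E.
  assert (T1 : re (pair (hs_eps' H A h1 (graph D delta m1)) (idm A)) (graph D delta m1) = top A).
  { rewrite <- hs_eps'_spec. apply top_eq.
    pose proof (proj1 (hs_Sigma'_adj H A h1 (graph D delta m1) (hs_Sigma' H A h1 (graph D delta m1)))
                  (le_refl _ _ _)) as K.
    destruct (hs_ccl_univ H A (bot A) A (idm A) (re_id _ _ _)) as [s [Hs _]].
    pose proof (re_mono _ _ _ (pair s (idm A)) _ _ K) as K2.
    unfold graph in K2. rewrite !reE in K2. rewrite pi2_pair, re_id in K2.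
    eapply le_trans; [|exact K2]. unfold top.
    replace (comp (prodmap m1 (idm A)) (pair s (idm A))) with (diag A); [apply le_refl|].
    rewrite prodmap_pair. unfold m1. rewrite Hs, comp_idl. reflexivity. }
  rewrite T1, top_pres in E. fold g in E.
  set (m2 := ccl X g) in E. set (e2 := hs_eps' H X h2 (graph D delta m2)) in E.
  unfold graph in E. rewrite reE, prodmap_pair, comp_idl in E.
  assert (Eq : forall rho : Pr D X, re (comp m2 e2) rho = rho).
  { intro rho. apply le_antisym.
    - rewrite <- (re_id _ _ rho) at 2. apply (LZ (idm X) (comp m2 e2)).
      + rewrite <- E. apply le_top.
      + apply le_refl.
    - apply (LZ (comp m2 e2) (idm X)).
      + apply SYM. rewrite <- E. apply le_top.
      + rewrite re_id. apply le_refl. }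
  rewrite <- (Eq g). rewrite <- reE. unfold m2. rewrite (hs_ccl_bot H X g).
  eapply le_trans; [apply re_mono; apply (le_bot (re m2 (bot X)))|].
  rewrite reE, Eq. apply le_refl.
Qed.


Ltac etr := match goal with
  | h1 : le ?a ?b, h2 : le ?b ?c |- le ?a ?c => eapply le_trans; [exact h1|exact h2] end.

Definition isneg {X} (n z : Pr D X) : Prop :=
  forall c, le c n <-> (forall d, le d c -> le d z -> le d (bot X)).

Lemma MEETTRICK {O W} (k : Hom O W) (c y : Pr D W) :
  le (top O) (re k y) -> (forall d, le d c -> le d y -> le d (bot W)) ->
  le (re k c) (bot O).
Proof.
  intros Ht Hd. destruct (meet_ex c y) as [mm Hmm].
  pose proof (Hd mm (proj1 Hmm) (proj1 (proj2 Hmm))) as Hb.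
  pose proof (meet_pres k _ _ _ Hmm) as [_ [_ Hk]].
  eapply le_trans; [apply Hk; [apply le_refl| eapply le_trans; [apply le_top|exact Ht]]|].
  rewrite <- (BP k). apply re_mono. exact Hb.
Qed.

Lemma triv_top {O} : le (top O) (bot O) -> forall a b : Pr D O, le a b.
Proof.
  intros h a b. eapply le_trans; [apply le_top|]. eapply le_trans; [exact h|apply le_bot].
Qed.

Lemma NEG_STRONG {X} (z : Pr D X) : exists n, isneg n z /\
  (forall W (g : Hom W X), le (re g n) (bot W) -> le (top W) (re g z)) /\
  (forall W (g : Hom W X), le (re g z) (bot W) -> le (top W) (re g n)).
Proof.
  destruct (classic (is_stable_initial (coc X z))) as [S|hz].
  - pose proof (coc_stable_top z S) as Zt.
    exists (bot X). split; [|split].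
    + intro c. split.
      * intros h d h1 _. eapply le_trans; [exact h1|exact h].
      * intro h. apply h; [apply le_refl|apply Zt].
    + intros W g _. eapply le_trans; [|apply re_mono; apply (Zt (top X))].
      rewrite top_pres. apply le_refl.
    + intros W g h. apply (triv_top); eapply le_trans; [|exact h].
      eapply le_trans; [|apply re_mono; apply (Zt (top X))]. rewrite top_pres. apply le_refl.
  - set (m := ccl X z). set (e := hs_eps' H X hz (graph D delta m)).
    set (n := re (pair e (idm X)) (graph D delta m)).
    assert (Mn : le (top _) (re m n)).
    { unfold n, e. rewrite <- hs_eps'_spec.
      pose proof (proj1 (hs_Sigma'_adj H X hz (graph D delta m) (hs_Sigma' H X hz (graph D delta m)))
                  (le_refl _ _ _)) as K.
      pose proof (re_mono _ _ _ (pair (idm _) m) _ _ K) as K2.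
      unfold graph in K2. rewrite !reE, pi2_pair, prodmap_pair, comp_idl, comp_idr in K2.
      replace (pair m m) with (comp (diag X) m) in K2 by (cn; reflexivity).
      eapply le_trans; [|exact K2]. apply TOPG. }
    assert (nf : n = re (pair (comp m e) (idm X)) (delta X)).
    { unfold n, graph. rewrite reE, prodmap_pair, comp_idl. reflexivity. }
    assert (HA : forall d, le d n -> le d z -> le d (bot X)).
    { intros d h1 h2. rewrite nf in h1.
      pose proof (LZ (comp m e) (idm X) z d (SYM _ _ _ h1)) as K.
      rewrite re_id in K. specialize (K h2). rewrite <- reE in K. unfold m in K.
      rewrite (hs_ccl_bot H X z), BP in K. exact K. }
    assert (HB' : forall W (g : Hom W X), le (re g z) (bot W) -> le (top W) (re g n)).
    { intros W g h. destruct (hs_ccl_univ H X z W g (bot_eq _ h)) as [u [Hu _]].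
      fold m in Hu. rewrite <- Hu, <- reE, <- (top_pres u). apply re_mono. exact Mn. }
    assert (HB : forall W (g : Hom W X), le (re g n) (bot W) -> le (top W) (re g z)).
    { intros W g h. apply CRIT2. apply triv_top.
      set (t := ccl W (re g z)).
      pose proof (HB' _ (comp g t)) as K. rewrite <- !reE in K.
      unfold t in K. rewrite (hs_ccl_bot H W (re g z)) in K. specialize (K (le_refl _ _ _)).
      eapply le_trans; [exact K|]. rewrite <- (BP (ccl W (re g z))). apply re_mono. exact h. }
    exists n. split; [|split; assumption].
    intro c. split.
    + intros h d h1 h2. apply HA; [etr|exact h2].
    + intro h. apply CRIT2. apply MEETTRICK with (y := z); [|exact h].
      apply HB. rewrite (hs_ccl_bot H X n). apply le_refl.
Qed.

Lemma NEG_AND {X} (n z : Pr D X) d : isneg n z -> le d n -> le d z -> le d (bot X).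
Proof. intros Hn h1 h2. apply (proj1 (Hn n) (le_refl _ _ _)); assumption. Qed.

Lemma NEG_UNIQ {X} (n n' z : Pr D X) : isneg n z -> isneg n' z -> n = n'.
Proof.
  intros H1 H2. apply le_antisym.
  - apply H2. intros d h1 h2. apply (NEG_AND n z d H1); assumption.
  - apply H1. intros d h1 h2. apply (NEG_AND n' z d H2); assumption.
Qed.

Lemma NEG_EX {X} (z : Pr D X) : exists n, isneg n z.
Proof. destruct (NEG_STRONG z) as [n [h _]]. exists n. exact h. Qed.

Lemma NEG_B {X} (n z : Pr D X) : isneg n z ->
  forall W (g : Hom W X), le (re g n) (bot W) -> le (top W) (re g z).
Proof.
  intro Hn. destruct (NEG_STRONG z) as [n' [Hn' [HB _]]].
  rewrite (NEG_UNIQ n n' z Hn Hn'). exact HB.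
Qed.

Lemma NEG_B' {X} (n z : Pr D X) : isneg n z ->
  forall W (g : Hom W X), le (re g z) (bot W) -> le (top W) (re g n).
Proof.
  intro Hn. destruct (NEG_STRONG z) as [n' [Hn' [_ HB']]].
  rewrite (NEG_UNIQ n n' z Hn Hn'). exact HB'.
Qed.

Lemma NEG_INV {X} (n z : Pr D X) : isneg n z -> isneg z n.
Proof.
  intros Hn c. split.
  - intros h d h1 h2. apply (NEG_AND n z d Hn); [exact h2|etr].
  - intro h. apply CRIT2. apply MEETTRICK with (y := n); [|exact h].
    apply (NEG_B' n z Hn). rewrite (hs_ccl_bot H X z). apply le_refl.
Qed.

Lemma NEG_PRES {W X} (g : Hom W X) (n z : Pr D X) : isneg n z -> isneg (re g n) (re g z).
Proof.
  intros Hn c. split.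
  - intros h d h1 h2. destruct (meet_ex n z) as [mm Hmm].
    pose proof (NEG_AND n z mm Hn (proj1 Hmm) (proj1 (proj2 Hmm))) as Hb.
    pose proof (meet_pres g _ _ _ Hmm) as [_ [_ Hk]].
    eapply le_trans; [apply Hk; [etr|exact h2]|].
    rewrite <- (BP g). apply re_mono. exact Hb.
  - intro h. apply CRIT2. apply MEETTRICK with (y := re g z); [|exact h].
    rewrite reE. apply (NEG_B n z Hn). rewrite <- reE, (hs_ccl_bot H W (re g n)). apply le_refl.
Qed.

Lemma NEG_ANTI {X} (na a nb b : Pr D X) : isneg na a -> isneg nb b -> le a b -> le nb na.
Proof.
  intros Ha Hb h. apply Ha. intros d h1 h2. apply (NEG_AND nb b d Hb h1). etr.
Qed.

Lemma NEG_SW {X} (na a nb b : Pr D X) : isneg na a -> isneg nb b -> le a nb -> le b na.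
Proof.
  intros Ha Hb h. apply Ha. intros d h1 h2. apply (NEG_AND nb b d Hb); [etr|exact h1].
Qed.


Lemma JOIN_CHAR {X} (na a nb b mm j : Pr D X) :
  isneg na a -> isneg nb b -> is_meet D mm na nb -> isneg j mm -> is_join D j a b.
Proof.
  intros Ha Hb Hm Hj. split; [|split].
  - apply Hj. intros d h1 h2. apply (NEG_AND na a d Ha); [eapply le_trans; [exact h2|apply Hm]|exact h1].
  - apply Hj. intros d h1 h2. apply (NEG_AND nb b d Hb); [eapply le_trans; [exact h2|apply Hm]|exact h1].
  - intros c hac hbc. destruct (NEG_EX c) as [nc Hc].
    apply (NEG_INV nc c Hc). intros d h1 h2.
    apply (NEG_AND j mm d Hj h1). apply Hm.
    + eapply le_trans; [exact h2|]. apply (NEG_ANTI na a nc c Ha Hc hac).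
    + eapply le_trans; [exact h2|]. apply (NEG_ANTI nb b nc c Hb Hc hbc).
Qed.

Lemma JOIN_EX {X} (a b : Pr D X) : exists j, is_join D j a b.
Proof.
  destruct (NEG_EX a) as [na Ha]. destruct (NEG_EX b) as [nb Hb].
  destruct (meet_ex na nb) as [mm Hm]. destruct (NEG_EX mm) as [j Hj].
  exists j. eapply JOIN_CHAR; eassumption.
Qed.

Lemma JOIN_UNIQ {X} (j j' a b : Pr D X) : is_join D j a b -> is_join D j' a b -> j = j'.
Proof.
  intros [h1 [h2 h3]] [h1' [h2' h3']]. apply le_antisym; auto.
Qed.

Lemma JOIN_PRES {W X} (g : Hom W X) (j a b : Pr D X) :
  is_join D j a b -> is_join D (re g j) (re g a) (re g b).
Proof.
  intro Hj.
  destruct (NEG_EX a) as [na Ha]. destruct (NEG_EX b) as [nb Hb].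
  destruct (meet_ex na nb) as [mm Hm]. destruct (NEG_EX mm) as [j' Hj'].
  rewrite (JOIN_UNIQ j j' a b Hj (JOIN_CHAR na a nb b mm j' Ha Hb Hm Hj')).
  eapply JOIN_CHAR; [apply (NEG_PRES g _ _ Ha)|apply (NEG_PRES g _ _ Hb)|apply meet_pres; exact Hm|apply (NEG_PRES g _ _ Hj')].
Qed.

Definition CIMP {X} (x a b : Pr D X) : Prop :=
  forall c, le x c <-> (forall m, is_join D m c a -> le b m).

Lemma CIMP_CHAR {X} (x a b na : Pr D X) : isneg na a -> is_meet D x b na -> CIMP x a b.
Proof.
  intros Ha Hx c.
  destruct (NEG_EX c) as [nc Hc]. destruct (meet_ex nc na) as [mm Hm].
  destruct (NEG_EX mm) as [jj Hjj].
  pose proof (JOIN_CHAR nc c na a mm jj Hc Ha Hm Hjj) as HJ.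
  split.
  - intros hxc m Hmj. rewrite (JOIN_UNIQ m jj c a Hmj HJ).
    apply Hjj. intros d h1 h2.
    apply (NEG_AND nc c d Hc); [eapply le_trans; [exact h2|apply Hm]|].
    eapply le_trans; [|exact hxc]. apply Hx; [exact h1|eapply le_trans; [exact h2|apply Hm]].
  - intro h. specialize (h jj HJ).
    apply (NEG_INV nc c Hc). intros d h1 h2.
    apply (NEG_AND jj mm d Hjj).
    + eapply le_trans; [exact h1|]. eapply le_trans; [exact (proj1 Hx)|exact h].
    + apply Hm; [exact h2|]. eapply le_trans; [exact h1|apply Hx].
Qed.

Lemma CIMP_EX {X} (a b : Pr D X) : exists x, CIMP x a b.
Proof.
  destruct (NEG_EX a) as [na Ha]. destruct (meet_ex b na) as [x Hx].
  exists x. eapply CIMP_CHAR; eassumption.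
Qed.

Lemma CIMP_UNIQ {X} (x x' a b : Pr D X) : CIMP x a b -> CIMP x' a b -> x = x'.
Proof.
  intros H1 H2. apply le_antisym.
  - apply H1. apply H2. apply le_refl.
  - apply H2. apply H1. apply le_refl.
Qed.

Lemma CIMP_PRES {W X} (g : Hom W X) (x a b : Pr D X) :
  CIMP x a b -> CIMP (re g x) (re g a) (re g b).
Proof.
  intro Hx. destruct (NEG_EX a) as [na Ha]. destruct (meet_ex b na) as [x' Hx'].
  rewrite (CIMP_UNIQ x x' a b Hx (CIMP_CHAR x' a b na Ha Hx')).
  eapply CIMP_CHAR; [apply (NEG_PRES g _ _ Ha)|apply meet_pres; exact Hx'].
Qed.


Lemma prod_inv {W X Z : Ob C} (f : Hom W X) (q : Hom W Z) : is_product f q ->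
  exists j : Hom (prod X Z) W, comp f j = pi1 /\ comp q j = pi2 /\ comp j (pair f q) = idm W.
Proof.
  intro Hp. destruct (Hp _ pi1 pi2) as [j [[E1 E2] _]].
  exists j. split; [exact E1|split; [exact E2|]].
  destruct (Hp _ f q) as [u [_ Hu]].
  rewrite (Hu (comp j (pair f q))), (Hu (idm W)); [reflexivity| | | |].
  - apply comp_idr. - apply comp_idr.
  - rewrite comp_assoc, E1, pi1_pair. reflexivity.
  - rewrite comp_assoc, E2, pi2_pair. reflexivity.
Qed.

Lemma SIG_EX {W X} (f : Hom W X) : is_product_projection f -> exists S, left_adj D f S.
Proof.
  intros [Z [q Hp]].
  destruct (classic (is_stable_initial Z)) as [SZ|hZ].
  - exists (fun _ => bot X). intros psi phi. split; [intros _; apply (TRIV q SZ)|intros _; apply le_bot].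
  - destruct (prod_inv f q Hp) as [j [E1 [E2 E3]]].
    exists (fun g => hs_Sigma H X hZ (re j g)). intros psi phi.
    rewrite (hs_Sigma_adj H X hZ (re j psi) phi). split.
    + intro h. rewrite <- (re_id _ _ psi), <- E3, <- reE.
      eapply le_trans; [apply re_mono; exact h|]. rewrite reE, pi1_pair. apply le_refl.
    + intro h. eapply le_trans; [apply re_mono; exact h|]. rewrite reE, E1. apply le_refl.
Qed.

Lemma SIG_SEC {W X} (f : Hom W X) (S : Pr D W -> Pr D X) : is_product_projection f ->
  left_adj D f S ->
  (exists Z (w : Hom W Z), is_stable_initial Z) \/
  (forall g, exists s : Hom X W, comp f s = idm X /\ le (S g) (re s g)).
Proof.
  intros [Z [q Hp]] HS.
  destruct (classic (is_stable_initial Z)) as [SZ|hZ]; [left; exists Z, q; exact SZ|right].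
  destruct (prod_inv f q Hp) as [j [E1 [E2 E3]]].
  intro g. set (eps := hs_eps H X hZ (re j g)).
  exists (comp j (pair (idm X) eps)). split.
  - rewrite comp_assoc, E1, pi1_pair. reflexivity.
  - apply le_trans with (hs_Sigma H X hZ (re j g)).
    + apply HS. rewrite <- (re_id _ _ g) at 1. rewrite <- E3, <- reE.
      replace f with (comp (@pi1 _ X Z) (pair f q)) at 2 by apply pi1_pair.
      rewrite <- reE. apply re_mono. apply (hs_Sigma_adj H X hZ). apply le_refl.
    + rewrite hs_eps_spec. fold eps. rewrite reE. apply le_refl.
Qed.

Lemma SIG_BC {X Y W V : Ob C} (f : Hom W X) (h : Hom Y X) (g : Hom V Y) (k : Hom V W) :
  is_product_projection f -> is_pullback h f g k ->
  forall Sf Sg, left_adj D f Sf -> left_adj D g Sg ->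
  forall gamma, re h (Sf gamma) = Sg (re k gamma).
Proof.
  intros Pf [Eq Hpb] Sf Sg Hf Hg gamma. apply le_antisym.
  - destruct (SIG_SEC f Sf Pf Hf) as [[Z [w SZ]]|Hs].
    + assert (Sf gamma = bot X) as ->.
      { apply bot_eq. apply Hf. apply (TRIV w SZ). }
      rewrite BP. apply le_bot.
    + destruct (Hs gamma) as [s [Es Hsg]].
      destruct (Hpb _ (idm Y) (comp s h)) as [u [[Eu1 Eu2] _]].
      { rewrite comp_idr, comp_assoc, Es, comp_idl. reflexivity. }
      eapply le_trans; [apply re_mono; exact Hsg|]. rewrite reE, <- Eu2, <- reE.
      eapply le_trans; [apply re_mono; apply Hg; apply le_refl|].
      rewrite reE, Eu1, re_id. apply le_refl.
  - apply Hg. rewrite reE, Eq, <- reE. apply re_mono. apply Hf. apply le_refl.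
Qed.

Lemma PI_SPEC {W X} (f : Hom W X) (S : Pr D W -> Pr D X) (gam ngam : Pr D W) (N : Pr D X) :
  left_adj D f S -> isneg ngam gam -> isneg N (S ngam) ->
  forall c, le c N <-> le (re f c) gam.
Proof.
  intros HS Hg HN c. destruct (NEG_EX c) as [nc Hc].
  pose proof (NEG_PRES f _ _ Hc) as Hfc. pose proof (NEG_INV _ _ Hg) as Hg'.
  split.
  - intro h. apply (NEG_SW _ _ _ _ Hg' Hfc). apply HS.
    apply (NEG_SW _ _ _ _ Hc HN h).
  - intro h. apply (NEG_SW _ _ _ _ HN Hc). apply HS.
    apply (NEG_SW _ _ _ _ Hfc Hg' h).
Qed.

Lemma PI_EQ {W X} (f : Hom W X) (S P : Pr D W -> Pr D X) (gam ngam : Pr D W) (N : Pr D X) :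
  left_adj D f S -> right_adj D f P -> isneg ngam gam -> isneg N (S ngam) -> P gam = N.
Proof.
  intros HS HP Hg HN. pose proof (PI_SPEC f S gam ngam N HS Hg HN) as K.
  apply le_antisym.
  - apply K. apply HP. apply le_refl.
  - apply HP. apply K. apply le_refl.
Qed.

Lemma PI_EX {W X} (f : Hom W X) : is_product_projection f -> exists P, right_adj D f P.
Proof.
  intro Pf. destruct (SIG_EX f Pf) as [S HS].
  assert (K : forall gam : Pr D W, exists N : Pr D X, forall c, le c N <-> le (re f c) gam).
  { intro gam. destruct (NEG_EX gam) as [ng Hg]. destruct (NEG_EX (S ng)) as [N HN].
    exists N. apply (PI_SPEC f S gam ng N HS Hg HN). }
  exists (fun gam => proj1_sig (constructive_indefinite_description _ (K gam))).
  intros phi psi. destruct (constructive_indefinite_description _ (K psi)) as [N HN]. simpl.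
  symmetry. apply HN.
Qed.

Lemma PI_BC {X Y W V : Ob C} (f : Hom W X) (h : Hom Y X) (g : Hom V Y) (k : Hom V W) :
  is_product_projection f -> is_product_projection g -> is_pullback h f g k ->
  forall Pf Pg, right_adj D f Pf -> right_adj D g Pg ->
  forall gamma, re h (Pf gamma) = Pg (re k gamma).
Proof.
  intros PPf PPg Hpb Pf Pg HPf HPg gamma.
  destruct (SIG_EX f PPf) as [Sf HSf]. destruct (SIG_EX g PPg) as [Sg HSg].
  destruct (NEG_EX gamma) as [ng Hng]. destruct (NEG_EX (Sf ng)) as [N HN].
  rewrite (PI_EQ f Sf Pf gamma ng N HSf HPf Hng HN).
  pose proof (NEG_PRES h _ _ HN) as K. rewrite (SIG_BC f h g k PPf Hpb Sf Sg HSf HSg) in K.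
  symmetry. apply (PI_EQ g Sg Pg (re k gamma) (re k ng) _ HSg HPg (NEG_PRES k _ _ Hng) K).
Qed.

Lemma SIG_BC' {X Y W V : Ob C} (f : Hom W X) (h : Hom Y X) (g : Hom V Y) (k : Hom V W) :
  is_product_projection f -> is_product_projection g -> is_pullback h f g k ->
  forall Sf Sg, left_adj D f Sf -> left_adj D g Sg ->
  forall gamma, re h (Sf gamma) = Sg (re k gamma).
Proof. intros Pf _. apply SIG_BC; assumption. Qed.

Lemma EQ_OP X : exists dl : Pr D (prod X X), forall alpha,
  (forall t, (forall a, le t a) -> le (re (diag X) alpha) t) <-> le alpha dl.
Proof.
  destruct (NEG_EX (delta X)) as [N HN]. exists N. intro alpha. split.
  - intro h. specialize (h (bot _) le_bot).
    apply HN. intros d h1 h2.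
    pose proof (@LZP X X (prod X X) alpha pi1 pi1 pi2 d) as K.
    rewrite pair_pi, re_id in K.
    assert (h2' : le d (re (pair pi1 pi2) (delta X))) by (rewrite pair_pi, re_id; exact h2).
    specialize (K (SYM _ _ _ h2') h1).
    eapply le_trans; [exact K|].
    replace (pair (@pi1 _ X X) pi1) with (comp (diag X) (@pi1 _ X X)) by (cn; reflexivity).
    rewrite <- reE, <- (BP pi1). apply re_mono. exact h.
  - intros h t Ht. eapply le_trans; [apply re_mono; exact h|].
    eapply le_trans; [|apply (le_bot t)].
    pose proof (NEG_PRES (diag X) _ _ HN) as K.
    apply (NEG_AND _ _ _ K); [apply le_refl|]. fold (top X).
    apply le_top.
Qed.

End Doc.
Theorem mainTheorem13 (C : Cat) (D : Doctrine C) :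
  heaco D -> tripos (op_doctrine D) /\ has_full_comprehension (op_doctrine D).
Proof.
  intros [H]. split.
  - unfold tripos, is_top, is_bot, is_meet, is_join, is_imp, left_adj, right_adj.
    cbn [le re Pr op_doctrine].
    split; [|split; [|split; [|split; [|split]]]].
    + intro A. split; [exists (hs_bot H A); apply (le_bot D H)|].
      split; [exists (top D H A); apply (le_top D H)|].
      split; [intros a b; destruct (JOIN_EX D H a b) as [j Hj]; exists j; exact Hj|].
      split; [intros a b; destruct (meet_ex D H a b) as [m Hm]; exists m; exact Hm|].
      intros a b. destruct (CIMP_EX D H a b) as [x Hx]. exists x. exact Hx.
    + intros X A f. split; [|split; [|split; [|split]]].
      * intros t Ht a. assert (E : t = hs_bot H A) by (apply (bot_eq D H); apply Ht).
        rewrite E, (BP D H). apply (le_bot D H).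
      * intros b Hb a. assert (E : b = top D H A) by (apply (top_eq D H); apply Hb).
        rewrite E, (top_pres D H). apply (le_top D H).
      * intros m a b Hm. exact (JOIN_PRES D H f m a b Hm).
      * intros j a b Hj. exact (meet_pres D H f a b j Hj).
      * intros i a b Hi. exact (CIMP_PRES D H f i a b Hi).
    + intros W X f Pf. split.
      * destruct (PI_EX D H f Pf) as [P HP]. exists P. intros psi phi. symmetry. exact (HP phi psi).
      * destruct (SIG_EX D H f Pf) as [S HS]. exists S. intros phi psi. symmetry. exact (HS psi phi).
    + intros X Y W V f h g k Pf Pg Hpb. split.
      * intros Sf Sg HSf HSg gamma.
        apply (PI_BC D H f h g k Pf Pg Hpb Sf Sg); [intros p q; symmetry; apply HSf|intros p q; symmetry; apply HSg].
      * intros Sf Sg HSf HSg gamma.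
        apply (SIG_BC D H f h g k Pf Hpb Sf Sg); [intros p q; symmetry; apply HSf|intros p q; symmetry; apply HSg].
    + intro X. destruct (EQ_OP D H X) as [dl Hdl]. exists dl. exact Hdl.
    + exact (hs_higher H).
  - unfold has_full_comprehension, is_comprehension, is_top.
    cbn [le re Pr op_doctrine].
    split; [|split].
    + intro A. exists (hs_bot H A). apply (le_bot D H).
    + intros A alpha. exists (hs_coc H A alpha), (hs_ccl H A alpha). split.
      * intro a. rewrite (hs_ccl_bot H). apply (le_bot D H).
      * intros X f Hf. apply (hs_ccl_univ H). apply (bot_eq D H). apply Hf.
    + intros A alpha beta O1 O2 c d [Hc Uc] [Hd Ud] [g Hg].
      apply (CRIT2 D H).
      destruct (Uc _ (hs_ccl H A alpha)) as [u [Hu _]].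
      { intro a. rewrite (hs_ccl_bot H). apply (le_bot D H). }
      rewrite <- Hu, <- Hg, <- comp_assoc, re_comp.
      rewrite <- (BP D H (comp g u)). apply re_mono. apply Hd.
Qed.
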